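(* Let $[\mathbf v_1]\neq[\mathbf v_2]$ be points of $S^2/\pm1$. Choose one of the two simple (non-self-intersecting) geodesic segments in $S^2/\pm1$ from $[\mathbf v_1]$ to $[\mathbf v_2]$, lift it to a great-circle segment in $S^2$ (one of two lifts), and let $\mu\in S^3$ be the lifted rolling monodromy of rolling the moving sphere along this segment with radius ratio $\rho=3$. Then $\mu$ depends only on the ordered pair $([\mathbf v_1],[\mathbf v_2])$ and not on the choices made.
   Context: Identify $\mathbb R^3$ with $\mathrm{Im}(\mathbb H)$ and $S^3$ with unit quaternions. Rolling along a curve $\mathbf v(t)$ in $S^2$ with radius ratio $3$ is the curve $(\mathbf v(t),q(t))\in S^2\times S^3$ with $q(0)=1$, $4\dot{\mathbf v}=\boldsymbol\omega\times\mathbf v$ and $\boldsymbol\omega\cdot\mathbf v=0$, where $\boldsymbol\omega=2\dot q\bar q$; the lifted rolling monodromy is the final value of $q$. *)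

(* Defs.v *)
From Stdlib Require Import Reals.
From Coquelicot Require Import Coquelicot.
Open Scope R_scope.

(** Quaternions H = R^4 ; R^3 is identified with Im(H) (real part 0). *)
Record quat := Quat { qr : R; qi : R; qj : R; qk : R }.

Definition qone : quat := Quat 1 0 0 0.
Definition qadd (p q : quat) : quat :=
  Quat (qr p + qr q) (qi p + qi q) (qj p + qj q) (qk p + qk q).
Definition qscal (c : R) (p : quat) : quat :=
  Quat (c * qr p) (c * qi p) (c * qj p) (c * qk p).
Definition qopp (p : quat) : quat := qscal (-1) p.
Definition qconj (p : quat) : quat := Quat (qr p) (- qi p) (- qj p) (- qk p).
Definition qmul (p q : quat) : quat :=
  Quat (qr p * qr q - qi p * qi q - qj p * qj q - qk p * qk q)
       (qr p * qi q + qi p * qr q + qj p * qk q - qk p * qj q)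
       (qr p * qj q - qi p * qk q + qj p * qr q + qk p * qi q)
       (qr p * qk q + qi p * qj q - qj p * qi q + qk p * qr q).
Definition qnorm2 (p : quat) : R := qr p ^ 2 + qi p ^ 2 + qj p ^ 2 + qk p ^ 2.

Definition is_im (p : quat) : Prop := qr p = 0.
Definition dot3 (p q : quat) : R := qi p * qi q + qj p * qj q + qk p * qk q.
Definition cross3 (p q : quat) : quat :=
  Quat 0 (qj p * qk q - qk p * qj q)
         (qk p * qi q - qi p * qk q)
         (qi p * qj q - qj p * qi q).

Definition on_S2 (v : quat) : Prop := is_im v /\ dot3 v v = 1.
Definition on_S3 (q : quat) : Prop := qnorm2 q = 1.

(** Equality of classes in S^2/±1. *)
Definition proj_eq (v w : quat) : Prop := v = w \/ v = qopp w.

Definition qderive (f : R -> quat) (t : R) (df : quat) : Prop :=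
  is_derive (fun s => qr (f s)) t (qr df) /\ is_derive (fun s => qi (f s)) t (qi df) /\
  is_derive (fun s => qj (f s)) t (qj df) /\ is_derive (fun s => qk (f s)) t (qk df).

Definition rcont_on (f : R -> R) (T : R) : Prop :=
  forall t, 0 <= t <= T ->
    filterlim f (within (fun s => 0 <= s <= T) (locally t)) (locally (f t)).
Definition qcont_on (f : R -> quat) (T : R) : Prop :=
  rcont_on (fun s => qr (f s)) T /\ rcont_on (fun s => qi (f s)) T /\
  rcont_on (fun s => qj (f s)) T /\ rcont_on (fun s => qk (f s)) T.

(** Rolling along the curve v : [0,T] -> S^2 with radius ratio 3:
    a curve (v(t),q(t)) in S^2 x S^3, continuous on [0,T], differentiable on
    (0,T), with q(0) = 1, and, writing omega = 2 q' conj(q) (which lies in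
    Im(H) = R^3), 4 v' = omega x v and omega . v = 0. *)
Definition rolling3 (v q : R -> quat) (T : R) : Prop :=
  q 0 = qone /\
  (forall t, 0 <= t <= T -> on_S2 (v t) /\ on_S3 (q t)) /\
  qcont_on v T /\ qcont_on q T /\
  (forall t, 0 < t < T ->
     exists dv dq : quat,
       qderive v t dv /\ qderive q t dq /\
       let omega := qscal 2 (qmul dq (qconj (q t))) in
       is_im omega /\
       qscal 4 dv = cross3 omega (v t) /\
       dot3 omega (v t) = 0).

Definition rolling_monodromy3 (v q : R -> quat) (T : R) (mu : quat) : Prop :=
  rolling3 v q T /\ q T = mu.

Definition great_circle (a b : quat) (c : R) : R -> quat :=
  fun t => qadd (qscal (cos (c * t)) a) (qscal (sin (c * t)) b).

(** The curve t |-> great_circle a b c t, t in [0,T], is the lift of a simple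
    (non-self-intersecting) geodesic segment of S^2/±1 from [v1] to [v2]. *)
Definition lifted_simple_segment (v1 v2 a b : quat) (c T : R) : Prop :=
  on_S2 a /\ on_S2 b /\ dot3 a b = 0 /\ 0 < c /\ 0 < T /\
  proj_eq (great_circle a b c 0) v1 /\
  proj_eq (great_circle a b c T) v2 /\
  (forall s t, 0 <= s <= T -> 0 <= t <= T ->
     proj_eq (great_circle a b c s) (great_circle a b c t) -> s = t).

(* Main.v *)
Require Import Defs.
From Stdlib Require Import Reals Nsatz Lra.
From Coquelicot Require Import Coquelicot.
Open Scope R_scope.

Lemma dval (f : R -> R) x (l lp : R) : is_derive f x l -> @eq R l lp -> is_derive f x lp.
Proof. intros H ->; exact H. Qed.
Lemma dplus (f g : R -> R) x a b : is_derive f x a -> is_derive g x b ->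
  is_derive (fun s => f s + g s) x (a + b).
Proof. intros; apply (is_derive_plus f g); auto. Qed.
Lemma dminus (f g : R -> R) x a b : is_derive f x a -> is_derive g x b ->
  is_derive (fun s => f s - g s) x (a - b).
Proof. intros; apply (is_derive_minus f g); auto. Qed.
Lemma dmult (f g : R -> R) x a b : is_derive f x a -> is_derive g x b ->
  is_derive (fun s => f s * g s) x (a * g x + f x * b).
Proof. intros; apply (is_derive_mult f g); auto. intros; apply Rmult_comm. Qed.
Lemma dopp (f : R -> R) x a : is_derive f x a -> is_derive (fun s => - f s) x (- a).
Proof. intros; apply (is_derive_opp f); auto. Qed.
Lemma dconst (k : R) x : is_derive (fun _ => k) x 0.
Proof. apply (is_derive_const k). Qed.
Lemma dcos (k : R) x : is_derive (fun s => cos (k * s)) x (- k * sin (k * x)).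
Proof. auto_derive; auto; ring. Qed.
Lemma dsin (k : R) x : is_derive (fun s => sin (k * s)) x (k * cos (k * x)).
Proof. auto_derive; auto; ring. Qed.

Ltac dtac := repeat match goal with
  | |- is_derive (fun s => _ + _) _ _ => apply dplus
  | |- is_derive (fun s => _ - _) _ _ => apply dminus
  | |- is_derive (fun s => _ * _) _ _ => apply dmult
  | |- is_derive (fun s => - _) _ _ => apply dopp
  | |- is_derive (fun s => cos (_ * s)) _ _ => apply dcos
  | |- is_derive (fun s => sin (_ * s)) _ _ => apply dsin
  | H : is_derive ?f ?t _ |- is_derive ?f ?t _ => exact H
  | |- is_derive (fun _ => _) _ _ => apply dconst
  end.
Lemma omega_eq (a1 a2 a3 b1 b2 b3 w1 w2 w3 v1 v2 v3 c C S : R) :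
  a1*a1+a2*a2+a3*a3 = 1 -> b1*b1+b2*b2+b3*b3 = 1 -> a1*b1+a2*b2+a3*b3 = 0 ->
  v1 = C*a1+S*b1 -> v2 = C*a2+S*b2 -> v3 = C*a3+S*b3 ->
  v1*v1+v2*v2+v3*v3 = 1 ->
  w2*v3 - w3*v2 = 4*(c*(-S*a1 + C*b1)) ->
  w3*v1 - w1*v3 = 4*(c*(-S*a2 + C*b2)) ->
  w1*v2 - w2*v1 = 4*(c*(-S*a3 + C*b3)) ->
  w1*v1+w2*v2+w3*v3 = 0 ->
  w1 = 4*c*(a2*b3-a3*b2) /\ w2 = 4*c*(a3*b1-a1*b3) /\ w3 = 4*c*(a1*b2-a2*b1).
Proof.
  intros. subst v1 v2 v3. split; [|split]; nsatz.
Qed.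
Lemma lim_endpoint (f g : R -> R) (T t : R) : 0 < T -> (t = 0 \/ t = T) ->
  filterlim f (within (fun s => 0 <= s <= T) (locally t)) (locally (f t)) ->
  continuous g t -> (forall s, 0 < s < T -> f s = g s) -> f t = g t.
Proof.
  intros HT Ht Hf Hg Hfg.
  destruct (Req_dec (f t) (g t)) as [E|NE]; [exact E|exfalso].
  assert (He : 0 < Rabs (f t - g t) / 2).
  { apply Rdiv_lt_0_compat; [apply Rabs_pos_lt; lra|lra]. }
  set (eps := mkposreal _ He).
  apply (proj1 (filterlim_locally _ _)) with (eps := eps) in Hf.
  apply (proj1 (filterlim_locally _ _)) with (eps := eps) in Hg.
  destruct Hf as [d1 Hd1]. destruct Hg as [d2 Hd2].
  set (m := Rmin (Rmin d1 d2) T / 2).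
  assert (Hm0 : 0 < m).
  { unfold m. apply Rdiv_lt_0_compat; [|lra].
    apply Rmin_pos; [apply Rmin_pos; apply cond_pos|lra]. }
  assert (Hm1 : m < d1).
  { unfold m. pose proof (Rmin_l (Rmin d1 d2) T). pose proof (Rmin_l d1 d2).
    pose proof (cond_pos d1). lra. }
  assert (Hm2 : m < d2).
  { unfold m. pose proof (Rmin_l (Rmin d1 d2) T). pose proof (Rmin_r d1 d2).
    pose proof (cond_pos d2). lra. }
  assert (HmT : m < T).
  { unfold m. pose proof (Rmin_r (Rmin d1 d2) T). lra. }
  set (s := if Req_EM_T t 0 then m else T - m).
  assert (Hs : 0 < s < T /\ Rabs (s - t) = m).
  { unfold s. destruct (Req_EM_T t 0) as [->|N].
    - split; [lra|]. rewrite Rminus_0_r. apply Rabs_right; lra.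
    - destruct Ht as [Ht|Ht]; [contradiction|subst t].
      split; [lra|]. replace (T - m - T) with (- m) by ring.
      rewrite Rabs_Ropp; apply Rabs_right; lra. }
  destruct Hs as [Hs Hsm].
  assert (B1 : ball t d1 s).
  { unfold ball; simpl; unfold AbsRing_ball; simpl. unfold abs, minus, plus, opp; simpl.
    change (s + - t) with (s - t). lra. }
  assert (B2 : ball t d2 s).
  { unfold ball; simpl; unfold AbsRing_ball; simpl. unfold abs, minus, plus, opp; simpl.
    change (s + - t) with (s - t). lra. }
  specialize (Hd1 s B1 ltac:(lra)). specialize (Hd2 s B2).
  revert Hd1 Hd2. unfold ball; simpl; unfold AbsRing_ball; simpl. unfold abs, minus, plus, opp; simpl.
  rewrite (Hfg s Hs). simpl.
  unfold Rabs; repeat destruct Rcase_abs; lra.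
Qed.

Lemma const_interior (g : R -> R) T : 0 < T -> (forall t, 0 < t < T -> is_derive g t 0) ->
  forall s, 0 < s < T -> g s = g (T/2).
Proof.
  intros HT Hd s Hs.
  destruct (Rlt_or_le s (T/2)) as [H|H].
  - apply (eq_is_derive g s (T/2)); [|exact H]. intros t Ht. apply Hd. lra.
  - destruct (Rle_lt_or_eq_dec _ _ H) as [H'|H']; [|rewrite H'; reflexivity].
    symmetry. apply (eq_is_derive g (T/2) s); [|exact H']. intros t Ht. apply Hd. lra.
Qed.
Definition E (n1 n2 n3 x : R) : quat := Quat (cos x) (sin x * n1) (sin x * n2) (sin x * n3).

Lemma Gderiv (n1 n2 n3 k : R) (q : R -> quat) t dq : n1*n1+n2*n2+n3*n3 = 1 -> qderive q t dq ->
  dq = qscal k (qmul (Quat 0 n1 n2 n3) (q t)) ->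
  qderive (fun s => qmul (qconj (E n1 n2 n3 (k*s))) (q s)) t (Quat 0 0 0 0).
Proof.
  intros Hn [D0 [D1 [D2 D3]]] ->.
  unfold qderive, qmul, qconj, E, qscal in *; simpl in *.
  split; [|split; [|split]].
  all: (eapply dval; [dtac|]).
  all: cbv beta.
  all: generalize (qr (q t)) (qi (q t)) (qj (q t)) (qk (q t)) (cos (k*t)) (sin (k*t)).
  all: intros x0 x1 x2 x3 C S.

  4: transitivity (k*S*x3*(n1*n1+n2*n2+n3*n3-1)).
  3: transitivity (k*S*x2*(n1*n1+n2*n2+n3*n3-1)).
  2: transitivity (k*S*x1*(n1*n1+n2*n2+n3*n3-1)).
  1: transitivity (k*S*x0*(n1*n1+n2*n2+n3*n3-1)).
  all: try (rewrite Hn; ring).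
  all: ring.
Qed.
Lemma dq_solve (d0 d1 d2 d3 q0 q1 q2 q3 m1 m2 m3 : R) :
  q0*q0+q1*q1+q2*q2+q3*q3 = 1 -> d0*q0+d1*q1+d2*q2+d3*q3 = 0 ->
  - d0*q1 + d1*q0 - d2*q3 + d3*q2 = m1 ->
  - d0*q2 + d1*q3 + d2*q0 - d3*q1 = m2 ->
  - d0*q3 - d1*q2 + d2*q1 + d3*q0 = m3 ->
  d0 = - m1*q1 - m2*q2 - m3*q3 /\ d1 = m1*q0 + m2*q3 - m3*q2 /\
  d2 = - m1*q3 + m2*q0 + m3*q1 /\ d3 = m1*q2 - m2*q1 + m3*q0.
Proof.
  intros Hq Hd <- <- <-. split; [|split; [|split]]; nsatz.
Qed.

Lemma step1 (a1 a2 a3 b1 b2 b3 c T : R) (q : R -> quat) t :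
  a1*a1+a2*a2+a3*a3 = 1 -> b1*b1+b2*b2+b3*b3 = 1 -> a1*b1+a2*b2+a3*b3 = 0 ->
  rolling3 (great_circle (Quat 0 a1 a2 a3) (Quat 0 b1 b2 b3) c) q T -> 0 < t < T ->
  exists dq, qderive q t dq /\
    dq = qscal (2*c) (qmul (Quat 0 (a2*b3-a3*b2) (a3*b1-a1*b3) (a1*b2-a2*b1)) (q t)).
Proof.
  intros Ha Hb Hab [Hq0 [Hon [Hcv [Hcq Hd]]]] Ht.
  destruct (Hd t Ht) as [dv [dq [Hdv [Hdq [Him [Hcr Hdot]]]]]].
  exists dq; split; [exact Hdq|].
  destruct (Hon t ltac:(lra)) as [[_ Hv1] Hqn].
  destruct Hdv as [Dr [Di [Dj Dk]]].
  unfold great_circle, qadd, qscal in Di, Dj, Dk, Hv1, Hcr, Hdot; simpl in Di, Dj, Dk, Hv1, Hcr, Hdot.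
  assert (Ei : qi dv = c * (- sin (c*t) * a1 + cos (c*t) * b1)).
  { assert (X : is_derive (fun s => cos (c * s) * a1 + sin (c * s) * b1) t
                 (c * (- sin (c*t) * a1 + cos (c*t) * b1))).
    { clear Dr Di Dj Dk. eapply dval. dtac. simpl; ring. }
    rewrite <- (is_derive_unique _ _ _ Di). exact (is_derive_unique _ _ _ X). }
  assert (Ej : qj dv = c * (- sin (c*t) * a2 + cos (c*t) * b2)).
  { assert (X : is_derive (fun s => cos (c * s) * a2 + sin (c * s) * b2) t
                 (c * (- sin (c*t) * a2 + cos (c*t) * b2))).
    { clear Dr Di Dj Dk. eapply dval. dtac. simpl; ring. }
    rewrite <- (is_derive_unique _ _ _ Dj). exact (is_derive_unique _ _ _ X). }
  assert (Ek : qk dv = c * (- sin (c*t) * a3 + cos (c*t) * b3)).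
  { assert (X : is_derive (fun s => cos (c * s) * a3 + sin (c * s) * b3) t
                 (c * (- sin (c*t) * a3 + cos (c*t) * b3))).
    { clear Dr Di Dj Dk. eapply dval. dtac. simpl; ring. }
    rewrite <- (is_derive_unique _ _ _ Dk). exact (is_derive_unique _ _ _ X). }
  set (om := qscal 2 (qmul dq (qconj (q t)))) in *.
  assert (Hom : om = qscal 2 (qmul dq (qconj (q t)))) by reflexivity.
  clearbody om.
  destruct om as [w0 w1 w2 w3]. destruct dq as [d0 d1 d2 d3]. destruct (q t) as [q0 q1 q2 q3].
  unfold is_im, on_S3, qnorm2, dot3, cross3, qscal, qmul, qconj in *; simpl in *.
  injection Hcr; intros C3 C2 C1 _.
  injection Hom; intros O3 O2 O1 O0.
  rewrite Ei in C1; rewrite Ej in C2; rewrite Ek in C3.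
  edestruct (omega_eq a1 a2 a3 b1 b2 b3 w1 w2 w3 (cos (c*t) * a1 + sin (c*t) * b1)
     (cos (c*t) * a2 + sin (c*t) * b2) (cos (c*t) * a3 + sin (c*t) * b3) c (cos (c*t)) (sin (c*t))) as [W1 [W2 W3]];
    [exact Ha|exact Hb|exact Hab|reflexivity|reflexivity|reflexivity| | | | | | ].
  { rewrite <- Hv1; try ring. }
  { rewrite O2, O3, C1; try ring. }
  { rewrite O1, O3, C2; try ring. }
  { rewrite O1, O2, C3; try ring. }
  { rewrite O1, O2, O3, <- Hdot; try ring. }
  clear C1 C2 C3 Hdot Hv1 Ei Ej Ek Dr Di Dj Dk Hd Hon Hcv Hcq Hq0 Hdq.
  subst w0 w1 w2 w3.
  destruct (dq_solve d0 d1 d2 d3 q0 q1 q2 q3 (2*c*(a2*b3-a3*b2)) (2*c*(a3*b1-a1*b3)) (2*c*(a1*b2-a2*b1)))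
    as [E0 [E1 [E2 E3]]].
  { rewrite <- Hqn; ring. }
  { ring_simplify in O0. ring_simplify. lra. }
  { ring_simplify in W1. ring_simplify. lra. }
  { ring_simplify in W2. ring_simplify. lra. }
  { ring_simplify in W3. ring_simplify. lra. }
  f_equal; [rewrite E0|rewrite E1|rewrite E2|rewrite E3]; ring.
Qed.

Lemma quat_ext x y : qr x = qr y -> qi x = qi y -> qj x = qj y -> qk x = qk y -> x = y.
Proof. destruct x, y; simpl; intros; subst; reflexivity. Qed.

Lemma exd_cont (f : R -> R) x : ex_derive f x -> continuous f x.
Proof. intros H; apply (ex_derive_continuous f x H). Qed.

Lemma E_inv n1 n2 n3 x y : n1*n1+n2*n2+n3*n3 = 1 ->
  qmul (E n1 n2 n3 x) (qmul (qconj (E n1 n2 n3 x)) y) = y.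
Proof.
  intros Hn. destruct y as [y0 y1 y2 y3]. unfold qmul, qconj, E; simpl.
  pose proof (sin2_cos2 x) as Hs. unfold Rsqr in Hs.
  assert (K : cos x * cos x + sin x * sin x * (n1*n1+n2*n2+n3*n3) = 1) by (rewrite Hn; lra).
  f_equal;
  [ transitivity ((cos x * cos x + sin x * sin x * (n1*n1+n2*n2+n3*n3)) * y0)
  | transitivity ((cos x * cos x + sin x * sin x * (n1*n1+n2*n2+n3*n3)) * y1)
  | transitivity ((cos x * cos x + sin x * sin x * (n1*n1+n2*n2+n3*n3)) * y2)
  | transitivity ((cos x * cos x + sin x * sin x * (n1*n1+n2*n2+n3*n3)) * y3) ];
  try ring; rewrite K; ring.
Qed.

Lemma endpoint_q (q h : R -> quat) T t : 0 < T -> (t = 0 \/ t = T) -> qcont_on q T ->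
  continuous (fun s => qr (h s)) t -> continuous (fun s => qi (h s)) t ->
  continuous (fun s => qj (h s)) t -> continuous (fun s => qk (h s)) t ->
  (forall s, 0 < s < T -> q s = h s) -> q t = h t.
Proof.
  intros HT Ht [C0 [C1 [C2 C3]]] H0 H1 H2 H3 Hqh.
  assert (Ht' : 0 <= t <= T) by (destruct Ht; subst; lra).
  apply quat_ext.
  - apply (lim_endpoint (fun s => qr (q s)) (fun s => qr (h s)) T t HT Ht (C0 t Ht') H0).
    intros s Hs; rewrite (Hqh s Hs); reflexivity.
  - apply (lim_endpoint (fun s => qi (q s)) (fun s => qi (h s)) T t HT Ht (C1 t Ht') H1).
    intros s Hs; rewrite (Hqh s Hs); reflexivity.
  - apply (lim_endpoint (fun s => qj (q s)) (fun s => qj (h s)) T t HT Ht (C2 t Ht') H2).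
    intros s Hs; rewrite (Hqh s Hs); reflexivity.
  - apply (lim_endpoint (fun s => qk (q s)) (fun s => qk (h s)) T t HT Ht (C3 t Ht') H3).
    intros s Hs; rewrite (Hqh s Hs); reflexivity.
Qed.

Lemma final_q a1 a2 a3 b1 b2 b3 c T (q : R -> quat) :
  a1*a1+a2*a2+a3*a3 = 1 -> b1*b1+b2*b2+b3*b3 = 1 -> a1*b1+a2*b2+a3*b3 = 0 -> 0 < T ->
  rolling3 (great_circle (Quat 0 a1 a2 a3) (Quat 0 b1 b2 b3) c) q T ->
  q T = E (a2*b3-a3*b2) (a3*b1-a1*b3) (a1*b2-a2*b1) (2*c*T).
Proof.
  intros Ha Hb Hab HT Hr.
  set (n1 := a2*b3-a3*b2). set (n2 := a3*b1-a1*b3). set (n3 := a1*b2-a2*b1).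
  assert (Hn : n1*n1+n2*n2+n3*n3 = 1).
  { transitivity ((a1*a1+a2*a2+a3*a3)*(b1*b1+b2*b2+b3*b3) - (a1*b1+a2*b2+a3*b3)^2).
    - unfold n1, n2, n3; ring.
    - rewrite Ha, Hb, Hab; ring. }
  set (G := fun s => qmul (qconj (E n1 n2 n3 (2*c*s))) (q s)).
  assert (HG : forall t, 0 < t < T -> qderive G t (Quat 0 0 0 0)).
  { intros t Ht. destruct (step1 a1 a2 a3 b1 b2 b3 c T q t Ha Hb Hab Hr Ht) as [dq [Hdq Edq]].
    exact (Gderiv n1 n2 n3 (2*c) q t dq Hn Hdq Edq). }
  set (K := G (T/2)).
  assert (HK : forall s, 0 < s < T -> q s = qmul (E n1 n2 n3 (2*c*s)) K).
  { intros s Hs.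
    assert (GK : G s = K).
    { unfold K.
      assert (C0 : forall t, 0 < t < T -> is_derive (fun s => qr (G s)) t 0) by (intros t Ht; apply (HG t Ht)).
      assert (C1 : forall t, 0 < t < T -> is_derive (fun s => qi (G s)) t 0) by (intros t Ht; apply (HG t Ht)).
      assert (C2 : forall t, 0 < t < T -> is_derive (fun s => qj (G s)) t 0) by (intros t Ht; apply (HG t Ht)).
      assert (C3 : forall t, 0 < t < T -> is_derive (fun s => qk (G s)) t 0) by (intros t Ht; apply (HG t Ht)).
      pose proof (const_interior _ T HT C0 s Hs) as X0.
      pose proof (const_interior _ T HT C1 s Hs) as X1.
      pose proof (const_interior _ T HT C2 s Hs) as X2.
      pose proof (const_interior _ T HT C3 s Hs) as X3.
      cbv beta in X0, X1, X2, X3. apply quat_ext; assumption. }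
    rewrite <- GK. unfold G. symmetry. apply E_inv. exact Hn. }
  clearbody K. destruct Hr as [Hq0 [_ [_ [Hcq _]]]].
  assert (Cont : forall t : R, (continuous (fun s => qr (qmul (E n1 n2 n3 (2*c*s)) K)) t) /\
     (continuous (fun s => qi (qmul (E n1 n2 n3 (2*c*s)) K)) t) /\
     (continuous (fun s => qj (qmul (E n1 n2 n3 (2*c*s)) K)) t) /\
     (continuous (fun s => qk (qmul (E n1 n2 n3 (2*c*s)) K)) t)).
  { intros t; unfold qmul, E; simpl.
    split; [|split; [|split]]; apply exd_cont; auto_derive; auto. }
  destruct (Cont 0) as [A0 [A1 [A2 A3]]].
  pose proof (endpoint_q q (fun s => qmul (E n1 n2 n3 (2*c*s)) K) T 0 HT (or_introl eq_refl) Hcq A0 A1 A2 A3 HK) as E0.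
  destruct (Cont T) as [B0 [B1 [B2 B3]]].
  pose proof (endpoint_q q (fun s => qmul (E n1 n2 n3 (2*c*s)) K) T T HT (or_intror eq_refl) Hcq B0 B1 B2 B3 HK) as ET.
  rewrite ET. cbv beta.
  cbv beta in E0. rewrite Hq0 in E0. unfold E in E0. rewrite Rmult_0_r, cos_0, sin_0 in E0.
  destruct K as [k0 k1 k2 k3]. unfold qmul, E, qone in *; simpl in *.
  injection E0; intros F3 F2 F1 F0.
  ring_simplify in F0. ring_simplify in F1. ring_simplify in F2. ring_simplify in F3.
  subst k0 k1 k2 k3. f_equal; ring.
Qed.

Definition Fm (x w : quat) : quat :=
  Quat (2 * (dot3 x w)^2 - 1) (2 * dot3 x w * qi (cross3 x w))
       (2 * dot3 x w * qj (cross3 x w)) (2 * dot3 x w * qk (cross3 x w)).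

Lemma Fm_proj x x' w w' : proj_eq x x' -> proj_eq w w' -> Fm x w = Fm x' w'.
Proof.
  intros [->| ->] [->| ->]; unfold Fm, qopp, qscal, dot3, cross3; simpl; f_equal; ring.
Qed.

Lemma gc0 a1 a2 a3 b c : great_circle (Quat 0 a1 a2 a3) b c 0 = Quat 0 a1 a2 a3.
Proof.
  destruct b. unfold great_circle, qadd, qscal; simpl.
  replace (c * 0) with 0 by ring. rewrite cos_0, sin_0. f_equal; ring.
Qed.

Lemma mu_F v1 v2 a b c T q mu :
  lifted_simple_segment v1 v2 a b c T ->
  rolling_monodromy3 (great_circle a b c) q T mu ->
  mu = Fm (great_circle a b c 0) (great_circle a b c T).
Proof.
  intros [[Ha0 Ha] [[Hb0 Hb] [Hab [Hc [HT _]]]]] [Hr HqT].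
  destruct a as [a0 a1 a2 a3], b as [b0 b1 b2 b3].
  unfold is_im, dot3 in *; simpl in *. subst a0 b0.
  rewrite <- HqT, (final_q a1 a2 a3 b1 b2 b3 c T q Ha Hb Hab HT Hr), gc0.
  replace (2 * c * T) with (2 * (c * T)) by ring.
  unfold E, Fm, great_circle, qadd, qscal, dot3, cross3; simpl.
  rewrite cos_2a_cos, sin_2a.
  set (C := cos (c * T)); set (S := sin (c * T)).
  assert (D : a1 * (C * a1 + S * b1) + a2 * (C * a2 + S * b2) + a3 * (C * a3 + S * b3) = C).
  { transitivity (C * (a1*a1+a2*a2+a3*a3) + S * (a1*b1+a2*b2+a3*b3)); [ring|].
    rewrite Ha, Hab; ring. }
  rewrite D. f_equal; ring.
Qed.

Theorem lemma5 :
  forall (v1 v2 : quat),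
    on_S2 v1 -> on_S2 v2 -> ~ proj_eq v1 v2 ->
  forall (a b : quat) (c T : R) (q : R -> quat) (mu : quat)
         (a' b' : quat) (c' T' : R) (q' : R -> quat) (mu' : quat),
    lifted_simple_segment v1 v2 a b c T ->
    rolling_monodromy3 (great_circle a b c) q T mu ->
    lifted_simple_segment v1 v2 a' b' c' T' ->
    rolling_monodromy3 (great_circle a' b' c') q' T' mu' ->
    mu = mu'.
Proof.
  intros v1 v2 _ _ _ a b c T q mu a' b' c' T' q' mu' Hs Hm Hs' Hm'.
  rewrite (mu_F _ _ _ _ _ _ _ _ Hs Hm), (mu_F _ _ _ _ _ _ _ _ Hs' Hm').
  destruct Hs as [_ [_ [_ [_ [_ [P1 [P2 _]]]]]]].
  destruct Hs' as [_ [_ [_ [_ [_ [P1' [P2' _]]]]]]].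
  rewrite (Fm_proj _ _ _ _ P1 P2), (Fm_proj _ _ _ _ P1' P2'). reflexivity.
Qed.
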